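(* Let $n\ge 3$ and let $\mathcal D_n$ be a minimal DFA with state set $Q_n=\{0,\dots,n-1\}$ and initial state $0$ recognizing a left ideal, and let $T_n$ be its transition semigroup. If $|T_n|=n^{n-1}+n-1$, then $T_n=S_n$.
   Context: A left ideal is a nonempty $L\subseteq\Sigma^*$ with $L=\Sigma^*L$. The transition semigroup of a DFA is the set of transformations $q\mapsto\delta(q,w)$ of its state set induced by nonempty words $w$. Notation: for a transformation $t$, $qt$ is the image of $q$; $(p\to q)$ maps $p$ to $q$ and fixes all other states; $(Q_n\to q)$ is the constant map to $q$; $(p_0,\dots,p_{k-1})$ is the cyclic permutation $p_0\mapsto p_1\mapsto\cdots\mapsto p_{k-1}\mapsto p_0$ fixing all other states. $S_n$ (for $n\ge3$) is the transition semigroup of the DFA $\mathcal W_n$ with states $Q_n$, initial state $0$, final states $\{n-1\}$, alphabet $\{a,b,c,d,e\}$, where $a$ induces $(1,2,\dots,n-1)$, $b$ induces $(1,2)$, $c$ induces $(n-1\to 1)$, $d$ induces $(n-1\to 0)$, and $e$ induces $(Q_n\to 1)$. *)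

(* Defs.v *)
From mathcomp.classical Require Import boolp.
From mathcomp Require Import all_boot.

Set Implicit Arguments.
Unset Strict Implicit.
Unset Printing Implicit Defensive.

(* A complete DFA with state set Q_n = 'I_n = {0,...,n-1} over a finite
   alphabet A; the initial state is supplied separately. *)
Record dfa (n : nat) (A : finType) := Dfa {
  delta : 'I_n -> A -> 'I_n;
  final : {set 'I_n}
}.

Definition delta_star n A (D : dfa n A) (q : 'I_n) (w : seq A) : 'I_n :=
  foldl (delta D) q w.

Definition lang n A (D : dfa n A) (q0 : 'I_n) (w : seq A) : Prop :=
  delta_star D q0 w \in final D.

Definition left_ideal (A : Type) (L : seq A -> Prop) : Prop :=
  (exists w, L w) /\
  (forall x, L x <-> exists u w, x = u ++ w /\ L w).

Definition reachable n A (D : dfa n A) (q0 q : 'I_n) : Prop :=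
  exists w, delta_star D q0 w = q.

Definition distinguishable n A (D : dfa n A) (p q : 'I_n) : Prop :=
  exists w, (delta_star D p w \in final D) != (delta_star D q w \in final D).

Definition minimal n A (D : dfa n A) (q0 : 'I_n) : Prop :=
  (forall q, reachable D q0 q) /\
  (forall p q, p != q -> distinguishable D p q).

Definition word_trans n A (D : dfa n A) (w : seq A) : {ffun 'I_n -> 'I_n} :=
  [ffun q => delta_star D q w].

Definition trans_sg n A (D : dfa n A) : {set {ffun 'I_n -> 'I_n}} :=
  [set t | `[< exists w : seq A, w <> [::] /\ t = word_trans D w >]].

(* The witness DFA W_n (meaningful for n >= 3); letters a,b,c,d,e are
   0,1,2,3,4 : 'I_5.  [mk q k] is the state k (valid when k < n). *)
Definition mk n (q : 'I_n) (k : nat) : 'I_n := insubd q k.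

Definition W_delta (n : nat) (q : 'I_n) (x : 'I_5) : 'I_n :=
  match val x with
  | 0 => (* a : (1,2,...,n-1) *)
      if val q == 0 then q
      else if val q == n.-1 then mk q 1 else mk q (val q).+1
  | 1 => (* b : (1,2) *)
      if val q == 1 then mk q 2 else if val q == 2 then mk q 1 else q
  | 2 => (* c : (n-1 -> 1) *)
      if val q == n.-1 then mk q 1 else q
  | 3 => (* d : (n-1 -> 0) *)
      if val q == n.-1 then mk q 0 else q
  | _ => (* e : (Q_n -> 1) *)
      mk q 1
  end.

Definition W (n : nat) : dfa n 'I_5 :=
  Dfa (@W_delta n) [set q : 'I_n | val q == n.-1].

Definition S_sg (n : nat) : {set {ffun 'I_n -> 'I_n}} := trans_sg (W n).

(* Main.v *)
Require Import Defs.
From mathcomp.classical Require Import boolp.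
From mathcomp Require Import all_boot.
From mathcomp Require Import zify.
Set Implicit Arguments. Unset Strict Implicit. Unset Printing Implicit Defensive.

Lemma bern3 x k : x ^ (k.+2) + k * x ^ k.+1 + 'C(k, 2) * x ^ k <= x ^ 2 * (x.+1) ^ k.
Proof.
elim: k => [|k IH]; first by rewrite bin0n mul0n !addn0 expn0 muln1.
rewrite binS bin1 !expnS.
move: IH; rewrite !expnS.
set a := x ^ k; set b := x.+1 ^ k; set c := 'C(k, 2).
move=> IH. nia.
Qed.

Lemma twice_pow x k : 0 < x -> x <= k -> 2 * x ^ k <= (x.+1) ^ k.
Proof.
move=> x0 xk.
have H := bern3 x k.
have H2 : x ^ 2 * (2 * x ^ k) <= x ^ 2 * (x.+1) ^ k.
  apply: leq_trans H. move: xk. rewrite !expnS.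
  set a := x ^ k. set c := 'C(k, 2). move=> xk. nia.
by rewrite leq_pmul2l ?expn_gt0 ?x0 in H2.
Qed.

Lemma bin2_ge p : p.+4.+1 <= 'C(p.+4, 2).
Proof.
elim: p => [|p IH]; first by [].
rewrite binS bin1. lia.
Qed.

Lemma twice_pow2 m : 4 <= m -> 2 * (m.+1) ^ m <= (m.+2) ^ m.
Proof.
move=> m4.
have H := bern3 m.+1 m.
have Hc : m.+1 <= 'C(m, 2).
  have E : (m - 4).+4 = m by lia.
  by have := bin2_ge (m - 4); rewrite E; lia.
have Q : m.+1 * m.+1 <= m * m.+1 + 'C(m, 2) by nia.
have Q2 := leq_mul Q (leqnn (m.+1 ^ m)).
have H2 : (m.+1)^2 * (2 * m.+1 ^ m) <= (m.+1)^2 * (m.+2) ^ m.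
  apply: leq_trans H. rewrite !expnS expn0 muln1.
  move: Q2. set a := m.+1 ^ m. set c := 'C(m, 2). set x := m.+1.
  rewrite !mulnDl. lia.
by rewrite leq_pmul2l ?expn_gt0 in H2.
Qed.

Lemma partial_sum m j : j <= m ->
  \sum_(k < j) (k.+1) ^ m * k.+2 <= j * (j.+1) ^ m.
Proof.
elim: j => [|j IH] jm; first by rewrite big_ord0.
rewrite big_ord_recr /=.
have IH' := IH (ltnW jm).
have T := twice_pow (ltn0Sn j) jm.
move: IH' T. set s := \sum_(k < j) _. set a := j.+1 ^ m. set b := j.+2 ^ m. nia.
Qed.

Lemma numeric_core m : 1 <= m ->
  (m.+2) ^ m + \sum_(k < m.+1) (k.+1) ^ m * k.+2 <= (m.+2) ^ m.+1 + (2 * m).+1.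
Proof.
move=> m1.
case: (leqP 4 m) => m4.
  rewrite big_ord_recr /=.
  have P := partial_sum (leqnn m).
  have T := twice_pow2 m4.
  have T2 := leq_mul (leqnn m.+1) T.
  move: P T2; rewrite expnS. set s := \sum_(k < m) _. set a := m.+1 ^ m. set b := m.+2 ^ m.
  move=> P T2. lia.
case: m m1 m4 => [|[|[|[|]]]] // _ _.
all: rewrite !big_ord_recr big_ord0 /=; vm_compute; reflexivity.
Qed.

Section SumUp.
Variables (T : finType) (R : rel T).
Hypothesis Rrefl : reflexive R.
Hypothesis Rtrans : transitive R.
Hypothesis Ranti : forall x y, R x y -> R y x -> x = y.
Variable h : nat -> nat.
Hypothesis hmono : {homo h : x y / x <= y}.

Lemma exists_minimal (S : {set T}) x0 : x0 \in S ->
  exists2 m, m \in S & forall y, y \in S -> R y m -> y = m.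
Proof.
move=> x0S.
case: (arg_minnP (fun x => #|[set y in S | R y x]|) x0S) => m mS minm.
exists m => // y yS Rym.
apply/eqP; apply/negPn/negP => ne.
have := minm y yS.
have sub : [set z in S | R z y] \proper [set z in S | R z m].
  apply/properP; split.
    by apply/subsetP => z; rewrite !inE => /andP[-> Rzy] /=; apply: Rtrans Rym.
  exists m; first by rewrite !inE Rrefl andbT.
  rewrite !inE negb_and; apply/orP; right; apply/negP => Rmy; by rewrite (Ranti Rmy Rym) eqxx in ne.
by have := proper_card sub; rewrite ltnNge => /negP.
Qed.

Lemma sum_up_aux k : forall S : {set T}, #|S| = k ->
  \sum_(p in S) h #|[set y in S | R p y]| <= \sum_(i < k) h i.+1.
Proof.
elim: k => [|k IH] S cS.
  by rewrite big_ord0; move/eqP: cS; rewrite cards_eq0 => /eqP ->; rewrite big_set0.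
have [x0 x0S] : exists x0, x0 \in S.
  by apply/set0Pn; rewrite -cards_eq0 cS.
case: (exists_minimal x0S) => m mS minm.
rewrite (bigD1 m mS) big_ord_recr /= addnC.
apply: leq_add.
  have cSm : #|S :\ m| = k by move: cS; rewrite (cardsD1 m S) mS add1n => -[].
  apply: leq_trans (IH _ cSm).
  apply: eq_leq; apply: eq_big => [p|p]; first by rewrite !inE andbC.
  move=> /andP[pS pm].
  congr (h _); apply: eq_card => y; rewrite !inE.
  case: (y =P m) => [-> | _] //=.
  rewrite mS /=; apply/negP => Rpm.
  by move: pm; rewrite (minm p pS Rpm) eqxx.
apply: hmono; rewrite -cS; apply: subset_leq_card.
by apply/subsetP => y; rewrite inE => /andP[].
Qed.

Lemma sum_up (S : {set T}) :
  \sum_(p in S) h #|[set y in S | R p y]| <= \sum_(i < #|S|) h i.+1.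
Proof. exact: sum_up_aux. Qed.
End SumUp.

Lemma card_fibers (X J : finType) (A : {set X}) (g : X -> J) :
  #|A| = \sum_(j : J) #|[set x in A | g x == j]|.
Proof.
rewrite -sum1_card (partition_big g predT) //.
apply: eq_bigr => j _; rewrite -sum1_card; apply: eq_bigl => x.
by rewrite !inE.
Qed.

Lemma in_pffun_on (X Y : finType) (y0 : Y) (D : {pred X}) (Rg : {pred Y}) (f : {ffun X -> Y}) :
  (f \in pffun_on y0 D Rg) = [forall x, if x \in D then f x \in Rg else f x == y0].
Proof.
apply/familyP/forallP => H x; have := H x; by case: (x \in D).
Qed.

Section Comb.
Variable m : nat.
Local Notation n := m.+2.
Local Notation fT := {ffun 'I_n -> 'I_n}.
Variable z : 'I_n.
Variable R : rel 'I_n.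
Hypothesis Rrefl : reflexive R.
Hypothesis Rtrans : transitive R.
Hypothesis Ranti : forall x y, R x y -> R y x -> x = y.
Hypothesis Rz : forall x, R z x.
Variables a b : 'I_n.
Hypotheses (az : a != z) (ab : a != b) (Rab : R a b).
Hypothesis m1 : 0 < m.

Definition Mon := [set f : fT | [forall p, forall q, R p q ==> R (f p) (f q)]].
Definition Fp := [set f : fT | [forall x, R (f z) (f x)]].
Definition u p := #|[set y | R p y]|.

Lemma bz : b != z.
Proof. apply/eqP => E; move: Rab; rewrite E => Raz. by move: az; rewrite (Ranti Raz (Rz a)) eqxx. Qed.

Lemma Mon_sub : Mon \subset Fp.
Proof.
apply/subsetP => f; rewrite !inE => /forallP H; apply/forallP => x.
by have /forallP/(_ x)/implyP := H z; apply.
Qed.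

Definition sw (x : 'I_n) := if x == a then b else if x == b then a else x.
Definition iota (f : fT) : fT := [ffun x => f (sw x)].

Lemma swK : involutive sw.
Proof.
move=> x; rewrite /sw.
case: (x =P a) => [->|xa]; first by rewrite eqxx eq_sym (negbTE ab).
case: (x =P b) => [->|xb]; first by rewrite eqxx.
by rewrite (introF eqP xa) (introF eqP xb).
Qed.

Lemma iotaK : involutive iota.
Proof. by move=> f; apply/ffunP => x; rewrite !ffunE swK. Qed.

Lemma swz : sw z = z.
Proof. by rewrite /sw eq_sym (negbTE az) eq_sym (negbTE bz). Qed.

Lemma iota_bad : iota @: [set f in Mon | f a != f b] \subset Fp :\: Mon.
Proof.
apply/subsetP => g /imsetP[f]; rewrite !inE => /andP[/forallP Mf fab] ->.
apply/andP; split.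
  apply/negP => /forallP /(_ a) /forallP /(_ b) /implyP /(_ Rab).
  rewrite !ffunE /sw eqxx eq_sym (negbTE ab) eqxx => Rba.
  have := Mf a => /forallP /(_ b) /implyP /(_ Rab) => Rab'.
  by move: fab; rewrite (Ranti Rab' Rba) eqxx.
apply/forallP => x; rewrite !ffunE swz.
by have /forallP/(_ (sw x))/implyP := Mf z; apply.
Qed.

Lemma two_mon : 2 * #|Mon| <= #|Fp| + #|[set f in Fp | f a == f b]|.
Proof.
have H1 : #|[set f in Mon | f a != f b]| + #|Mon| <= #|Fp|.
  have := subset_leq_card iota_bad.
  rewrite card_imset; last exact: (can_inj iotaK).
  rewrite cardsD.
  have -> : Fp :&: Mon = Mon by apply/setIidPr; exact: Mon_sub.
  have := subset_leq_card Mon_sub. lia.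
have H2 : #|[set f in Mon | f a == f b]| <= #|[set f in Fp | f a == f b]|.
  apply: subset_leq_card; apply/subsetP => f; rewrite !inE => /andP[Mf ->].
  by rewrite andbT; have := subsetP Mon_sub f; rewrite !inE; apply.
have H3 : #|Mon| = #|[set f in Mon | f a == f b]| + #|[set f in Mon | f a != f b]|.
  rewrite -(cardsID [set f : fT | f a == f b] Mon); congr (_ + _); apply: eq_card => f; rewrite !inE //; exact: andbC.
lia.
Qed.

Lemma card_Fp_fiber p :
  #|[set f in Fp | f z == p]| = u p ^ n.-1.
Proof.
have -> : n.-1 = #|predC1 z| by rewrite cardC1 card_ord.
rewrite /u -(card_pffun_on p); apply: eq_card => f.
rewrite in_pffun_on !inE; apply/andP/forallP => [[/forallP H /eqP fz] x|H].
  rewrite !inE; case: (x =P z) => [->|_] /=; first by rewrite fz.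
  by rewrite -fz H.
have fz : f z == p by have := H z; rewrite !inE eqxx.
split=> //; apply/forallP => x; rewrite (eqP fz).
have := H x; rewrite !inE; case: (x =P z) => [->|_] /=; first by move=> /eqP ->.
by [].
Qed.

Lemma card_Fpe_fiber p :
  #|[set f in Fp | (f z == p) && (f a == f b)]| <= u p ^ n.-2.
Proof.
have -> : n.-2 = #|[set~ z] :\ b|.
  have H := cardsD1 b [set~ z]; have H2 := cardsC1 z.
  have H3 : #|'I_n| = n := card_ord n.
  rewrite !inE bz /= H2 H3 /= add1n in H. by case: H.
rewrite /u -(card_pffun_on p).
pose g (f : fT) : fT := [ffun x => if x == b then f z else f x].
have ginj : {in [set f in Fp | (f z == p) && (f a == f b)] &, injective g}.
  move=> f1 f2; rewrite !inE => /andP[_ /andP[_ e1]] /andP[_ /andP[_ e2]] E.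
  apply/ffunP => x.
  have Ex y : y != b -> f1 y = f2 y.
    by move=> yb; have := congr1 (fun h : fT => h y) E; rewrite /g !ffunE (negbTE yb).
  case: (x =P b) => [->|/eqP xb]; last exact: Ex.
  by rewrite -(eqP e1) -(eqP e2) Ex.
rewrite -(card_in_imset ginj); apply: subset_leq_card; apply/subsetP => h.
rewrite in_pffun_on; case/imsetP => f fin ->; move: fin.
rewrite !inE => /andP[/forallP Ff /andP[/eqP fz _]].
apply/forallP => x; rewrite !ffunE !inE.
case: (x =P z) => [->|/eqP xz]; first by rewrite andbF /=; case: ifP => _; rewrite fz.
rewrite /= andbT; case: (boolP (x == b)) => xb /=; first by rewrite fz.
by rewrite -fz Ff.
Qed.

Lemma u_z : u z = n.
Proof.
rewrite /u -[RHS]card_ord; apply: eq_card => y; by rewrite !inE Rz.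
Qed.

Lemma u_notz p : p != z -> u p = #|[set y in [set~ z] | R p y]|.
Proof.
move=> pz; rewrite /u; apply: eq_card => y; rewrite !inE.
case: (y =P z) => [->|] //=; apply/negP => Rpz.
by move: pz; rewrite (Ranti Rpz (Rz p)) eqxx.
Qed.

Theorem mon_small : #|Mon| < n ^ n.-1 + n - 1.
Proof.
have T := two_mon.
have F1 : #|Fp| = n ^ n.-1 + \sum_(p in [set~ z]) u p ^ n.-1.
  rewrite (card_fibers _ (fun f : fT => f z)) (bigD1 z) //= card_Fp_fiber u_z.
  congr (_ + _); apply: eq_big => p; [by rewrite !inE | move=> _; exact: card_Fp_fiber].
have F2 : #|[set f in Fp | f a == f b]| <= n ^ n.-2 + \sum_(p in [set~ z]) u p ^ n.-2.
  rewrite (card_fibers _ (fun f : fT => f z)) (bigD1 z) //=.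
  apply: leq_add.
    have H := card_Fpe_fiber z; rewrite u_z in H; apply: leq_trans H.
    by apply: eq_leq; apply: eq_card => f; rewrite !inE; case: (f z == _); case: (f a == f b); rewrite ?andbT ?andbF.
  rewrite (eq_bigl (fun p => p \in [set~ z])); last by move=> p; rewrite !inE.
  apply: leq_sum => p _; apply: leq_trans (card_Fpe_fiber p).
  by apply: eq_leq; apply: eq_card => f; rewrite !inE; case: (f z == _); case: (f a == f b); rewrite ?andbT ?andbF.
pose h k := k ^ m.+1 + k ^ m.
have hmono : {homo h : x y / x <= y}.
  by move=> x y xy; rewrite /h leq_add // leq_exp2r.
have S := sum_up Rrefl Rtrans Ranti hmono [set~ z].
rewrite cardsC1 card_ord /= in S.
have E : \sum_(p in [set~ z]) u p ^ n.-1 + \sum_(p in [set~ z]) u p ^ n.-2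
    = \sum_(p in [set~ z]) h #|[set y in [set~ z] | R p y]|.
  rewrite -big_split /=; apply: eq_bigr => p; rewrite !inE => pz.
  by rewrite /h (u_notz pz).
have N := @numeric_core m.
have E2 : \sum_(i < m.+1) h i.+1 = \sum_(k < m.+1) (k.+1) ^ m * k.+2.
  by apply: eq_bigr => i _; rewrite /h expnS mulnC -{2}(muln1 (i.+1 ^ m)) -mulnDr addn1.
have N' := N m1.
simpl in *. lia.
Qed.
End Comb.

Definition comp n (t s : {ffun 'I_n -> 'I_n}) : {ffun 'I_n -> 'I_n} := [ffun x => s (t x)].

Lemma wt_cat n A (D : dfa n A) w1 w2 :
  word_trans D (w1 ++ w2) = comp (word_trans D w1) (word_trans D w2).
Proof. by apply/ffunP => x; rewrite !ffunE /delta_star foldl_cat. Qed.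

Lemma memT n A (D : dfa n A) t :
  reflect (exists w, w <> [::] /\ t = word_trans D w) (t \in trans_sg D).
Proof. by rewrite inE; apply: asboolP. Qed.

Lemma T_comp n A (D : dfa n A) t s :
  t \in trans_sg D -> s \in trans_sg D -> comp t s \in trans_sg D.
Proof.
move=> /memT[w1 [w1n ->]] /memT[w2 [w2n ->]]; apply/memT.
exists (w1 ++ w2); split; last by rewrite wt_cat.
by case: w1 w1n.
Qed.

Section Gen.
Variable m : nat.
Hypothesis m1 : 0 < m.
Local Notation n := m.+2.
Local Notation fT := {ffun 'I_n -> 'I_n}.
Local Notation G := (S_sg n).

Definition z0 : 'I_n := ord0.
Definition one : 'I_n := inord 1.
Definition two : 'I_n := inord 2.
Definition top : 'I_n := inord m.+1.
Definition idf : fT := [ffun x => x].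
Definition swap (i j : 'I_n) : fT := [ffun x => if x == i then j else if x == j then i else x].
Definition el (i j : 'I_n) : fT := [ffun x => if x == i then j else x].

Lemma val_one : nat_of_ord one = 1. Proof. by rewrite /one /= inordK. Qed.
Lemma val_two : nat_of_ord two = 2. Proof. by rewrite /two /= inordK //; lia. Qed.
Lemma val_top : nat_of_ord top = m.+1. Proof. by rewrite /top /= inordK. Qed.

Lemma val_mk (q : 'I_n) k : k < n -> nat_of_ord (mk q k) = k.
Proof. by move=> kn; rewrite /mk val_insubd kn. Qed.

Definition lt (i : nat) (H : i < 5) : 'I_5 := Ordinal H.

Definition letter_map (x : 'I_5) : fT := word_trans (W n) [:: x].

Lemma letter_mapE x q : letter_map x q = W_delta q x.
Proof. by rewrite ffunE. Qed.

Lemma letter_in x : letter_map x \in G.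
Proof. by apply/memT; exists [:: x]. Qed.

Definition aT := letter_map (@lt 0 isT).
Definition bT := letter_map (@lt 1 isT).
Definition cT := letter_map (@lt 2 isT).
Definition dT := letter_map (@lt 3 isT).
Definition eT := letter_map (@lt 4 isT).

Lemma aT_val x : nat_of_ord (aT x) =
  if nat_of_ord x == 0 then 0 else if nat_of_ord x == m.+1 then 1 else (nat_of_ord x).+1.
Proof.
rewrite /aT letter_mapE /W_delta /=.
case: (nat_of_ord x =P 0) => [->|x0] //.
case: (nat_of_ord x =P m.+1) => [xm|xm]; first by rewrite val_mk.
rewrite val_mk //; have := ltn_ord x; move: xm x0 => /= xm x0 xn. lia.
Qed.

Lemma bT_eq : bT = swap one two.
Proof.
apply/ffunP => x; rewrite /bT letter_mapE /W_delta /= ffunE; apply/ord_inj.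
have ho := val_one; have ht := val_two.
case: (x =P one) => [->|xo]; first by rewrite ho /= val_mk.
case: (x =P two) => [->|xt]; first by rewrite ht /= val_mk.
have xo' : nat_of_ord x != 1 by apply/eqP => E; apply: xo; apply/ord_inj; rewrite E ho.
have xt' : nat_of_ord x != 2 by apply/eqP => E; apply: xt; apply/ord_inj; rewrite E ht.
by rewrite (negbTE xo') (negbTE xt').
Qed.

Lemma cT_eq : cT = el top one.
Proof.
apply/ffunP => x; rewrite /cT letter_mapE /W_delta /= ffunE; apply/ord_inj.
case: (x =P top) => [->|xt]; first by rewrite val_top eqxx val_mk // val_one.
have xt' : nat_of_ord x != m.+1 by apply/eqP => E; apply: xt; apply/ord_inj; rewrite E val_top.
by rewrite (negbTE xt').
Qed.

Lemma dT_eq : dT = el top z0.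
Proof.
apply/ffunP => x; rewrite /dT letter_mapE /W_delta /= ffunE; apply/ord_inj.
case: (x =P top) => [->|xt]; first by rewrite val_top eqxx val_mk.
have xt' : nat_of_ord x != m.+1 by apply/eqP => E; apply: xt; apply/ord_inj; rewrite E val_top.
by rewrite (negbTE xt').
Qed.

Lemma eT_eq : eT = [ffun => one].
Proof.
by apply/ffunP => x; rewrite /eT letter_mapE /W_delta /= ffunE; apply/ord_inj; rewrite val_mk // val_one.
Qed.


Lemma modS_case a d : 0 < d ->
  a.+1 %% d = if (a %% d).+1 == d then 0 else (a %% d).+1.
Proof.
move=> d0; rewrite -addn1 -modnDml addn1.
have := ltn_pmod a d0; case: eqP => [->|ne] lt; first exact: modnn.
by rewrite modn_small //; lia.
Qed.

Definition rk k : fT :=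
  [ffun x => if nat_of_ord x == 0 then x else mk x (((nat_of_ord x).-1 + k) %% m.+1).+1].

Lemma rk_val k x : nat_of_ord (rk k x) =
  if nat_of_ord x == 0 then 0 else (((nat_of_ord x).-1 + k) %% m.+1).+1.
Proof.
rewrite ffunE; case: (nat_of_ord x =P 0) => [->|] //= _.
by rewrite val_mk // ltnS ltn_pmod.
Qed.

Lemma idf_val x : idf x = x. Proof. by rewrite ffunE. Qed.

Lemma rk0 : rk 0 = idf.
Proof.
apply/ffunP => x; apply/ord_inj; rewrite rk_val idf_val.
case: (nat_of_ord x =P 0) => [->|x0] //; rewrite addn0 modn_small; have := ltn_ord x; move: x0 => /= x0 xn; lia.
Qed.

Lemma rk_top : rk m.+1 = idf.
Proof.
apply/ffunP => x; apply/ord_inj; rewrite rk_val idf_val.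
case: (nat_of_ord x =P 0) => [->|x0] //; rewrite modnDr modn_small; have := ltn_ord x; move: x0 => /= x0 xn; lia.
Qed.

Lemma rk_succ k : comp (rk k) aT = rk k.+1.
Proof.
apply/ffunP => x; apply/ord_inj; rewrite [comp _ _ x]ffunE aT_val !rk_val.
case: (eqVneq (nat_of_ord x) 0) => [x0|x0] //=.
rewrite /= addnS (modS_case _ (ltn0Sn m)).
set r := (_ %% m.+1).
by case: ifP.
Qed.

Lemma rk_succ' k : comp aT (rk k) = rk k.+1.
Proof.
apply/ffunP => x; apply/ord_inj; rewrite [comp _ _ x]ffunE !rk_val aT_val.
case: (eqVneq (nat_of_ord x) 0) => [x0|x0] //=.

have xn := ltn_ord x.
case: (eqVneq (nat_of_ord x) m.+1) => [xm|xm] /=.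
  by rewrite xm /= add0n addnS -addSn modnDl.

by rewrite addnS -addSn prednK // lt0n.
Qed.

Lemma aT_rk1 : rk 1 = aT.
Proof.
rewrite -rk_succ rk0; apply/ffunP => x; by rewrite ffunE idf_val.
Qed.

Lemma rk_in k : 0 < k -> rk k \in G.
Proof.
elim: k => [|k IH] //= _.
case: k IH => [|k] IH; first by rewrite aT_rk1; exact: letter_in.
rewrite -rk_succ; apply: T_comp; [exact: IH | exact: letter_in].
Qed.

Lemma conj_swap (pi rho : fT) i j :
  comp pi rho = idf -> comp rho pi = idf ->
  comp (comp pi (swap i j)) rho = swap (rho i) (rho j).
Proof.
move=> h1 h2.
have e1 x : rho (pi x) = x by have := congr1 (fun f : fT => f x) h1; rewrite !ffunE.
have e2 x : pi (rho x) = x by have := congr1 (fun f : fT => f x) h2; rewrite !ffunE.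
apply/ffunP => x; rewrite !ffunE.
have Eq y : (pi x == y) = (x == rho y).
  apply/eqP/eqP => [<-|->]; [by rewrite e1 | by rewrite e2].
by rewrite !Eq; case: ifP => _; [|case: ifP => _]; rewrite ?e1.
Qed.

Lemma conj_el (pi rho : fT) i j :
  comp pi rho = idf -> comp rho pi = idf ->
  comp (comp pi (el i j)) rho = el (rho i) (rho j).
Proof.
move=> h1 h2.
have e1 x : rho (pi x) = x by have := congr1 (fun f : fT => f x) h1; rewrite !ffunE.
have e2 x : pi (rho x) = x by have := congr1 (fun f : fT => f x) h2; rewrite !ffunE.
apply/ffunP => x; rewrite !ffunE.
have Eq y : (pi x == y) = (x == rho y).
  apply/eqP/eqP => [<-|->]; [by rewrite e1 | by rewrite e2].
by rewrite !Eq; case: ifP => _; rewrite ?e1.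
Qed.


Lemma compE (t s : fT) x : comp t s x = s (t x). Proof. by rewrite ffunE. Qed.

Lemma swapK i j x : swap i j (swap i j x) = x.
Proof.
rewrite !ffunE.
case: (eqVneq x i) => [->|xi]; first by rewrite eqxx; case: (eqVneq j i) => [->|ji]; rewrite ?eqxx.
case: (eqVneq x j) => [->|xj]; first by rewrite eqxx.
by rewrite (negbTE xi) (negbTE xj).
Qed.

Lemma swap_inv i j : comp (swap i j) (swap i j) = idf.
Proof. by apply/ffunP => x; rewrite [comp _ _ x]ffunE swapK idf_val. Qed.

Lemma swap_ii i : swap i i = idf.
Proof. by apply/ffunP => x; rewrite !ffunE; case: (eqVneq x i) => [->|]. Qed.

Lemma swap_l i j : swap i j i = j. Proof. by rewrite ffunE eqxx. Qed.
Lemma swap_r i j : swap i j j = i.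
Proof. by rewrite ffunE eqxx; case: (eqVneq j i) => [->|]. Qed.
Lemma swap_o i j x : x != i -> x != j -> swap i j x = x.
Proof. by move=> xi xj; rewrite ffunE (negbTE xi) (negbTE xj). Qed.

Lemma swapC i j : swap i j = swap j i.
Proof.
apply/ffunP => x; case: (eqVneq x i) => [->|xi]; first by rewrite swap_l swap_r.
case: (eqVneq x j) => [->|xj]; first by rewrite swap_r swap_l.
by rewrite !swap_o.
Qed.

Lemma idf_in : idf \in G.
Proof. by rewrite -(swap_inv one two) -bT_eq; apply: T_comp; exact: letter_in. Qed.

Lemma inordK' k : k < n -> nat_of_ord (inord k : 'I_n) = k.
Proof. by move=> kn; rewrite inordK. Qed.

Lemma ord_neq (i j : 'I_n) : nat_of_ord i != nat_of_ord j -> i != j.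
Proof. by apply: contra => /eqP ->. Qed.

Lemma conj_in pi rho t : pi \in G -> rho \in G -> t \in G -> comp (comp pi t) rho \in G.
Proof. by move=> h1 h2 h3; apply: T_comp => //; apply: T_comp. Qed.

Lemma adj_in k : 0 < k -> k <= m -> swap (inord k) (inord k.+1) \in G.
Proof.
elim: k => [|k IH] // _ km.
case: k IH km => [|k] IH km.
  have -> : (inord 1 : 'I_n) = one by [].
  have -> : (inord 2 : 'I_n) = two by [].
  by rewrite -bT_eq; exact: letter_in.
have h1 : comp (rk m) aT = idf by rewrite rk_succ rk_top.
have h2 : comp aT (rk m) = idf by rewrite rk_succ' rk_top.
have E1 : aT (inord k.+1) = inord k.+2.
  apply/ord_inj; rewrite aT_val !inordK' //; try lia.
  by case: ifP => /eqP; lia.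
have E2 : aT (inord k.+2) = inord k.+3.
  apply/ord_inj; rewrite aT_val !inordK' //; try lia.
  by case: ifP => /eqP; lia.
rewrite -E1 -E2 -(conj_swap _ _ h1 h2).
apply: conj_in; [exact: rk_in | exact: letter_in | apply: IH => //; lia].
Qed.

Lemma swap_in_aux i d : 0 < i -> i + d.+1 <= m.+1 -> swap (inord i) (inord (i + d.+1)) \in G.
Proof.
move=> i0; elim: d => [|d IH] hd; first by rewrite addn1; apply: adj_in => //; lia.
set j := i + d.+1.
have sj : swap (inord j) (inord j.+1) \in G by apply: adj_in; rewrite /j; lia.
have E := conj_swap (inord i) (inord j) (swap_inv (inord j) (inord j.+1)) (swap_inv _ _).
rewrite swap_l swap_o in E; last first.
- by apply: ord_neq; rewrite !inordK' /j; lia.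
- by apply: ord_neq; rewrite !inordK' /j; lia.
have -> : i + d.+2 = j.+1 by rewrite /j addnS.
rewrite -E; apply: conj_in => //; apply: IH; lia.
Qed.

Lemma swap_in x y : x != z0 -> y != z0 -> swap x y \in G.
Proof.
move=> xz yz.
have x0 : 0 < nat_of_ord x by rewrite lt0n; apply: contra xz => /eqP E; apply/eqP/ord_inj.
have y0 : 0 < nat_of_ord y by rewrite lt0n; apply: contra yz => /eqP E; apply/eqP/ord_inj.
have xn := ltn_ord x; have yn := ltn_ord y.
case: (ltngtP (nat_of_ord x) (nat_of_ord y)) => [xy|yx|/ord_inj ->]; last by rewrite swap_ii idf_in.
  have := @swap_in_aux x (y - x).-1 x0.
  rewrite -(inord_val x) -(inord_val y) !inordK' // => H.
  have -> : nat_of_ord y = x + (y - x).-1.+1 by lia.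
  by apply: H; lia.
rewrite swapC.
have := @swap_in_aux y (x - y).-1 y0.
rewrite -(inord_val x) -(inord_val y) !inordK' // => H.
have -> : nat_of_ord x = y + (x - y).-1.+1 by lia.
by apply: H; lia.
Qed.


Lemma top_neq_z0 : top != z0.
Proof. by apply: ord_neq; rewrite val_top. Qed.
Lemma one_neq_z0 : one != z0.
Proof. by apply: ord_neq; rewrite val_one. Qed.
Lemma top_neq_one : top != one.
Proof. by apply: ord_neq; rewrite val_top val_one; lia. Qed.

Lemma el_ii i : el i i = idf.
Proof. by apply/ffunP => x; rewrite !ffunE; case: (eqVneq x i) => [->|]. Qed.

Lemma swap_inj i j : injective (swap i j).
Proof. exact: (can_inj (swapK i j)). Qed.

Lemma el_in y t : y != z0 -> el y t \in G.
Proof.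
move=> yz.
case: (eqVneq t y) => [->|ty]; first by rewrite el_ii idf_in.
case: (eqVneq t z0) => [->|tz].
  have E := conj_el top z0 (swap_inv y top) (swap_inv y top).
  rewrite swap_r swap_o in E; last by rewrite eq_sym top_neq_z0.
  - rewrite -E -dT_eq; apply: conj_in; [exact: swap_in top_neq_z0 | exact: swap_in top_neq_z0 | exact: letter_in].
  - by rewrite eq_sym.
set v := swap top y t.
have vtop : v != top.
  apply: contra ty => /eqP E; apply/eqP; apply: (@swap_inj top y).
  by rewrite -/v E swap_r.
have vz : v != z0.
  apply: contra tz => /eqP E; apply/eqP; apply: (@swap_inj top y).
  rewrite -/v E swap_o //; [by rewrite eq_sym top_neq_z0 | by rewrite eq_sym].
pose rho := comp (swap one v) (swap top y).
pose pi := comp (swap top y) (swap one v).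
have h1 : comp pi rho = idf.
  by apply/ffunP => x; rewrite idf_val !compE swapK swapK.
have h2 : comp rho pi = idf.
  by apply/ffunP => x; rewrite idf_val !compE swapK swapK.
have E := conj_el top one h1 h2.
have r1 : rho top = y.
  rewrite /rho compE (@swap_o one v top) ?swap_l //; [exact: top_neq_one | by rewrite eq_sym].
have r2 : rho one = t.
  by rewrite /rho compE swap_l swapK.
rewrite r1 r2 in E; rewrite -E -cT_eq.
have sy : swap top y \in G by apply: swap_in => //; exact: top_neq_z0.
have so : swap one v \in G by apply: swap_in => //; exact: one_neq_z0.
apply: conj_in; [exact: T_comp | exact: T_comp | exact: letter_in].
Qed.


Lemma fix0_in_aux k : forall f : fT, #|[set x | f x != x]| <= k -> f z0 = z0 -> f \in G.
Proof.
elim: k => [|k IH] f hk fz.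
  have -> : f = idf.
    move: hk; rewrite leqn0 cards_eq0 => /eqP S0.
    apply/ffunP => x; rewrite idf_val; apply/eqP.
    have : x \notin [set x | f x != x] by rewrite S0 inE.
    by rewrite inE negbK.
  exact: idf_in.
case: (boolP [exists y, y \notin codom f]) => [/existsP[y yn]|/existsPn allc].
  have yz : y != z0.
    by apply: contra yn => /eqP ->; rewrite -{1}fz codom_f.
  have fyy : f y != y by apply: contra yn => /eqP {1}<-; rewrite codom_f.
  pose f' : fT := [ffun x => if x == y then y else f x].
  have fE : f = comp f' (el y (f y)).
    apply/ffunP => x; rewrite compE !ffunE.
    case: (eqVneq x y) => [->|xy]; first by rewrite eqxx.
    case: (eqVneq (f x) y) => [fxy|] //.
    by move: yn; rewrite -fxy codom_f.
  have f'z : f' z0 = z0 by rewrite ffunE eq_sym (negbTE yz).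
  have pr : [set x | f' x != x] \proper [set x | f x != x].
    apply/properP; split.
      apply/subsetP => x; rewrite !inE ffunE.
      by case: (eqVneq x y) => [->|]; rewrite ?eqxx.
    by exists y; rewrite !inE ?ffunE ?eqxx.
  have hk' : #|[set x | f' x != x]| <= k.
    by have := proper_card pr; lia.
  rewrite fE; apply: T_comp; [exact: IH | exact: el_in].
have inj : injective f.
  apply/injectiveP; apply/injectiveP.
  have : #|codom f| == #|'I_n|.
    by apply/eqP; apply: eq_card => y; have := allc y; rewrite negbK => ->.
  by move/image_injP => H x1 x2; apply: H.
case: (boolP [exists x, f x != x]) => [/existsP[x fx]|/existsPn allf]; last first.
  have -> : f = idf by apply/ffunP => x; rewrite idf_val; apply/eqP; have := allf x; rewrite negbK.
  exact: idf_in.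
set y := f x.
have xz : x != z0 by apply: contra fx => /eqP ->; rewrite fz.
have yz : y != z0 by apply: contra xz => /eqP E; rewrite -fz in E; rewrite (inj _ _ E).
pose f' : fT := comp f (swap x y).
have fE : f = comp f' (swap x y).
  by apply/ffunP => w; rewrite !compE swapK.
have f'z : f' z0 = z0 by rewrite compE fz swap_o // eq_sym.
have pr : [set w | f' w != w] \proper [set w | f w != w].
  apply/properP; split.
    apply/subsetP => w; rewrite !inE; apply: contraLR; rewrite !negbK => /eqP fw.
    rewrite compE fw swap_o //.
      by apply: contra fx => /eqP E; rewrite -E fw.
    apply/eqP => E; have fy : f y = y by rewrite -E.
    have xy : x = y by apply: inj; rewrite fy.
    by move: fx; rewrite -/y -xy eqxx.
  exists x; rewrite !inE //.
  by rewrite compE -/y swap_r eqxx.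
have hk' : #|[set x | f' x != x]| <= k.
  by have := proper_card pr; lia.
rewrite fE; apply: T_comp; [exact: IH | apply: swap_in; rewrite // eq_sym; exact: fx].
Qed.


Definition Mset : {set fT} := [set f : fT | (f z0 == z0) || [forall x, f x == f z0]].

Lemma M_sub_G : Mset \subset G.
Proof.
apply/subsetP => f; rewrite inE => /orP[/eqP fz|/forallP fc].
  exact: (@fix0_in_aux #|[set x | f x != x]|).
case: (eqVneq (f z0) z0) => [fz|pz]; first exact: (@fix0_in_aux #|[set x | f x != x]|).
have -> : f = comp eT (swap one (f z0)).
  by apply/ffunP => x; rewrite compE eT_eq [[ffun => _] x]ffunE swap_l (eqP (fc x)).
apply: T_comp; [exact: letter_in | apply: swap_in => //; exact: one_neq_z0].
Qed.

Lemma M_comp t s : t \in Mset -> s \in Mset -> comp t s \in Mset.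
Proof.
rewrite !inE => /orP[/eqP tz|/forallP tc] /orP[/eqP sz|/forallP sc].
- by rewrite compE tz sz eqxx.
- by apply/orP; right; apply/forallP => x; rewrite !compE tz (eqP (sc _)).
- by apply/orP; right; apply/forallP => x; rewrite !compE (eqP (tc x)).
- by apply/orP; right; apply/forallP => x; rewrite !compE (eqP (tc x)).
Qed.

Lemma letter_M x : letter_map x \in Mset.
Proof.
rewrite inE; apply/orP.
have v0 : nat_of_ord z0 = 0 by [].
case: x => [[|[|[|[|[|k]]]]] hx] //; rewrite /letter_map.
- by left; rewrite letter_mapE /W_delta /=.
- by left; rewrite letter_mapE /W_delta /=.
- by left; rewrite letter_mapE /W_delta /=.
- by left; rewrite letter_mapE /W_delta /=.
- right; apply/forallP => q; rewrite !letter_mapE /W_delta /=.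
  by apply/eqP/ord_inj; rewrite !val_mk.
Qed.

Lemma G_sub_M : G \subset Mset.
Proof.
apply/subsetP => t /memT[w [_ ->]].
elim/last_ind: w => [|w x IH].
  by rewrite inE; apply/orP; left; rewrite ffunE.
rewrite -cats1 wt_cat; apply: M_comp => //; exact: letter_M.
Qed.

Lemma S_eq_M : S_sg n = Mset.
Proof. by apply/eqP; rewrite eqEsubset G_sub_M M_sub_G. Qed.

Lemma card_M : #|Mset| <= n ^ n.-1 + n - 1.
Proof.
have H : Mset \subset [set f : fT | f z0 == z0] :|: [set f : fT | [forall x, f x == f z0] && (f z0 != z0)].
  apply/subsetP => f; rewrite !inE => /orP[->//|fc]; rewrite fc /=.
  by case: (f z0 == z0).
apply: leq_trans (subset_leq_card H) _.
apply: leq_trans (leq_card_setU _ _) _.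
have c1 : #|[set f : fT | f z0 == z0]| = n ^ n.-1.
  have -> : n.-1 = #|predC1 z0| by rewrite cardC1 card_ord.
  rewrite -[n in n ^ _]card_ord -[#|'I_n|]/#|@predT 'I_n| -(card_pffun_on z0).
  apply: eq_card => f; rewrite in_pffun_on inE; apply/eqP/forallP => [fz x|H0].
    by rewrite !inE; case: (eqVneq x z0) => [->|]; rewrite ?fz.
  by have := H0 z0; rewrite !inE eqxx => /eqP.
have c2 : #|[set f : fT | [forall x, f x == f z0] && (f z0 != z0)]| <= n.-1.
  have -> : n.-1 = #|[set~ z0]| by rewrite cardsC1 card_ord.
  have inj : {in [set f : fT | [forall x, f x == f z0] && (f z0 != z0)] &, injective (fun f : fT => f z0)}.
    move=> f1 f2; rewrite !inE => /andP[/forallP h1 _] /andP[/forallP h2 _] E.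
    by apply/ffunP => x; rewrite (eqP (h1 x)) (eqP (h2 x)).
  rewrite -(card_in_imset inj); apply: subset_leq_card; apply/subsetP => p /imsetP[f].
  by rewrite !inE => /andP[_ fz] ->.
rewrite c1; have -> : n ^ n.-1 + n - 1 = n ^ n.-1 + n.-1 by rewrite /=; lia.
by rewrite leq_add2l.
Qed.

End Gen.

Section Auto.
Variables (n : nat) (A : finType) (D : dfa n A).

Definition le_st (p q : 'I_n) : Prop :=
  forall w, delta_star D p w \in final D -> delta_star D q w \in final D.

Definition Rst : rel 'I_n := fun p q => `[< le_st p q >].

Lemma RstP p q : reflect (le_st p q) (Rst p q).
Proof. exact: asboolP. Qed.

Lemma Rst_refl : reflexive Rst.
Proof. by move=> p; apply/RstP => w. Qed.

Lemma Rst_trans : transitive Rst.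
Proof. by move=> q p r /RstP h1 /RstP h2; apply/RstP => w /h1 /h2. Qed.

Lemma ds_cat p u w : delta_star D p (u ++ w) = delta_star D (delta_star D p u) w.
Proof. by rewrite /delta_star foldl_cat. Qed.

Lemma Rst_mono w p q : Rst p q -> Rst (word_trans D w p) (word_trans D w q).
Proof.
move=> /RstP h; apply/RstP => v; rewrite !ffunE -!ds_cat; exact: h.
Qed.

End Auto.

Theorem theorem3 (n : nat) (A : finType) (D : dfa n A) (q0 : 'I_n) :
  3 <= n ->
  val q0 = 0 ->
  minimal D q0 ->
  left_ideal (lang D q0) ->
  #|trans_sg D| = n ^ n.-1 + n - 1 ->
  trans_sg D = S_sg n.
Proof.
case: n A D q0 => [|[|m]] A D q0 // n3 q00 [reach dist] [_ lid] card.
have m1 : 0 < m by [].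
have q0E : q0 = z0 m by apply/ord_inj.
pose R := Rst D.
have Ranti : forall x y, R x y -> R y x -> x = y.
  move=> x y /RstP h1 /RstP h2; apply/eqP; apply/negPn/negP => ne.
  case: (dist _ _ ne) => w.
  case E1: (delta_star D x w \in final D); case E2: (delta_star D y w \in final D) => //= _.
  - by move: (h1 w E1); rewrite E2.
  - by move: (h2 w E2); rewrite E1.
have Rz : forall x, R q0 x.
  move=> x; case: (reach x) => u <-; apply/RstP => w Lw.
  rewrite -ds_cat; have : lang D q0 (u ++ w) by apply/(lid (u ++ w)); exists u, w.
  by [].
have Tmon : forall t, t \in trans_sg D -> forall p q, R p q -> R (t p) (t q).
  by move=> t /memT[w [_ ->]] p q; apply: Rst_mono.
case: (boolP [exists a, exists b, (a != q0) && (a != b) && R a b]).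
  move=> /existsP[a /existsP[b /andP[/andP[az ab] Rab]]].
  have := @mon_small m q0 R (@Rst_refl _ _ D) (@Rst_trans _ _ D) Ranti Rz a b az ab Rab m1.
  have sub : trans_sg D \subset Mon R.
    apply/subsetP => t tT; rewrite inE; apply/forallP => p; apply/forallP => q.
    by apply/implyP; apply: Tmon.
  have := subset_leq_card sub; rewrite card => H2 H1; exfalso; move: H1 H2; set X := #|Mon R|; lia.
move=> /existsPn none.
have sub : trans_sg D \subset Mset m.
  apply/subsetP => t tT; rewrite inE -q0E; apply/orP.
  case: (eqVneq (t q0) q0) => [->|tz]; first by left.
  right; apply/forallP => x.
  have := none (t q0); rewrite negb_exists => /forallP /(_ (t x)).
  by rewrite tz (Tmon _ tT _ _ (Rz x)) /= andbT negbK eq_sym.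
rewrite (S_eq_M m1); apply/eqP; rewrite eqEcard sub card.
exact: card_M.
Qed.
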